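(* Let $V$ be a Whittaker module of type $\eta$ over $R$. Then $\mathrm{End}_R(V)\cong Z(R)/Z_V$ (via the action of the center on $V$). In particular $\mathrm{End}_R(V)$ is commutative.
   Context: Let $f\in\mathbb{C}[H]$ be a polynomial. $R=R(f)$ is the associative $\mathbb{C}$-algebra generated by $E,F,H$ with relations $EF-FE=f(H)$, $HE-EH=E$, $HF-FH=-F$. Let $R(E)=\mathbb{C}[E]$; $Z(R)$ is the center of $R$. Fix an algebra homomorphism $\eta:R(E)\to\mathbb{C}$ with $\eta(E)\neq0$. A vector $v$ of an $R$-module $V$ is a Whittaker vector (of type $\eta$) if $Ev=\eta(E)v$; $V$ is a Whittaker module of type $\eta$ if $V=Rv$ for some Whittaker vector $v$. $Z_V=\mathrm{Ann}_R(V)\cap Z(R)$. *)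

(* Defs.v *)
(* C is modelled as  Rr[i]  (complex numbers over a realType Rr;
   every realType is a complete archimedean ordered field, i.e. the reals). *)
From HB Require Import structures.
From mathcomp Require Import all_boot all_order all_algebra.
From mathcomp Require Import reals.
From mathcomp Require Import complex.
Set Implicit Arguments. Unset Strict Implicit. Unset Printing Implicit Defensive.
Import Order.TTheory GRing.Theory Num.Theory.
Local Open Scope ring_scope.

Section Defs.
Variable K : fieldType.

Definition smith_rel (p : {poly K}) (B : algType K) (e f h : B) : Prop :=
  [/\ e * f - f * e = horner_alg h p, h * e - e * h = e & h * f - f * h = - f].

Definition is_alg_hom (A B : algType K) (phi : A -> B) : Prop :=
  [/\ forall a b, phi (a + b) = phi a + phi b,
      forall (c : K) a, phi (c *: a) = c *: phi a,
      forall a b, phi (a * b) = phi a * phi b & phi 1 = 1].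

(* (A, E, F, H) is the algebra R(p) generated by E,F,H subject only to the
   relations of smith_rel: it satisfies them and is initial among K-algebras
   equipped with three elements satisfying them. *)
Definition is_R_of (p : {poly K}) (A : algType K) (E F H : A) : Prop :=
  smith_rel p E F H /\
  forall (B : algType K) (e f h : B), smith_rel p e f h ->
    (exists phi : A -> B, is_alg_hom phi /\ phi E = e /\ phi F = f /\ phi H = h) /\
    (forall phi psi : A -> B, is_alg_hom phi -> is_alg_hom psi ->
       phi E = psi E -> phi F = psi F -> phi H = psi H -> forall a, phi a = psi a).

Definition is_module (A : algType K) (V : lmodType K) (act : A -> V -> V) : Prop :=
  [/\ forall a v w, act a (v + w) = act a v + act a w,
      forall a b v, act (a + b) v = act a v + act b v,
      forall (c : K) a v, act (c *: a) v = c *: act a v,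
      forall a b v, act (a * b) v = act a (act b v) & forall v, act 1 v = v].

Definition central (A : algType K) (z : A) : Prop := forall a, z * a = a * z.

Definition in_Z_V (A : algType K) (V : lmodType K) (act : A -> V -> V) (z : A) : Prop :=
  central z /\ forall v, act z v = 0.

Definition is_endo (A : algType K) (V : lmodType K) (act : A -> V -> V) (g : V -> V) : Prop :=
  (forall v w, g (v + w) = g v + g w) /\ (forall a v, g (act a v) = act a (g v)).

(* v is a Whittaker vector of type eta, where eta(E) = c *)
Definition whittaker_vector (A : algType K) (V : lmodType K) (act : A -> V -> V)
  (E : A) (c : K) (v : V) : Prop := act E v = c *: v.

Definition whittaker_module (A : algType K) (V : lmodType K) (act : A -> V -> V)
  (E : A) (c : K) : Prop :=
  exists v, whittaker_vector act E c v /\ forall w, exists a, w = act a v.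

End Defs.

(* Main.v *)
Require Import Defs.
From HB Require Import structures.
From mathcomp Require Import all_boot all_order all_algebra.
From mathcomp Require Import reals.
From mathcomp Require Import complex.
From mathcomp Require Import boolp ring.
Set Implicit Arguments. Unset Strict Implicit. Unset Printing Implicit Defensive.
Import Order.TTheory GRing.Theory Num.Theory.
Local Open Scope ring_scope.

Lemma alg_hom_horner (K : fieldType) (A B : algType K) (phi : A -> B)
  (Hphi : is_alg_hom phi) (a : A) (q : {poly K}) :
  phi (horner_alg a q) = horner_alg (phi a) q.
Proof.
case: Hphi => hD hZ hM h1.
elim/poly_ind: q => [|q c IH].
  by rewrite !rmorph0 -(scale0r (0 : A)) hZ scale0r.
rewrite !rmorphD !rmorphM /= !horner_algX !horner_algC hD hM IH.
by rewrite hZ h1.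
Qed.

Section SubAlg.
Variable K : fieldType.
Variable A : algType K.
Variable P : A -> Prop.
Hypothesis P1 : P 1.
Hypothesis PD : forall a b, P a -> P b -> P (a + b).
Hypothesis PZ : forall (c : K) a, P a -> P (c *: a).
Hypothesis PM : forall a b, P a -> P b -> P (a * b).

Definition Pb : pred A := fun a => `[< P a >].
Lemma Pb_closed : subalg_closed Pb.
Proof.
split.
- by apply/asboolP.
- move=> c u v /asboolP Hu /asboolP Hv; apply/asboolP.
  apply: PD => //; exact: PZ.
- by move=> u v /asboolP Hu /asboolP Hv; apply/asboolP; apply: PM.
Qed.
HB.instance Definition _ := GRing.isSubalgClosed.Build K A Pb Pb_closed.
Record subT := SubT { sval : A; _ : sval \in Pb }.
HB.instance Definition _ := [isSub for sval].
HB.instance Definition _ := [Choice of subT by <:].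
HB.instance Definition _ := [SubChoice_isSubAlgebra of subT by <:].

Lemma sval_hom : is_alg_hom (val : subT -> A).
Proof.
split.
- by move=> a b; rewrite rmorphD.
- by move=> c a; rewrite linearZ.
- by move=> a b; rewrite rmorphM.
- by rewrite rmorph1.
Qed.

Lemma gen_ind (p : {poly K}) (E F H : A) (HR : is_R_of p E F H) :
  P E -> P F -> P H -> forall a, P a.
Proof.
move=> PE PF PH a.
have mE : E \in Pb by apply/asboolP.
have mF : F \in Pb by apply/asboolP.
have mH : H \in Pb by apply/asboolP.
pose e : subT := SubT mE. pose f : subT := SubT mF. pose h : subT := SubT mH.
case: HR => [[r1 r2 r3] HU].
have rel : smith_rel p e f h.
  split; apply: val_inj; rewrite /= ?rmorphB ?rmorphM ?rmorphN //=.
  by rewrite (alg_hom_horner sval_hom).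
case: (HU _ _ _ _ rel) => [[phi [hphi [pE [pF pH]]]] uniq].
have hc : is_alg_hom (fun x => val (phi x)).
  case: hphi => hD hZ hM h1; split.
  - by move=> x y; rewrite hD rmorphD.
  - by move=> c x; rewrite hZ linearZ.
  - by move=> x y; rewrite hM rmorphM.
  - by rewrite h1 rmorph1.
have hid : is_alg_hom (fun x : A => x) by [].
case: (HU _ _ _ _ (And3 r1 r2 r3)) => _ U.
have Ea : val (phi a) = a by apply: (U _ _ hc hid); rewrite /= ?pE ?pF ?pH.
rewrite -Ea; exact/asboolP/(valP (phi a)).
Qed.
End SubAlg.

Lemma lin_comb (R : comNzRingType) (a b c x y : R) : a = b -> x - y = c * (a - b) -> x = y.
Proof. by move=> -> /eqP; rewrite subrr mulr0 subr_eq0 => /eqP. Qed.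

Section Poly.
Variable K : numFieldType.
Fixpoint bp (j : nat) : {poly K} :=
  if j is k.+1 then (- (k.+1)%:R^-1)%:P * ('X + (k%:R)%:P) * bp k else 1.

Arguments bp : simpl never.
Lemma bpS k : bp k.+1 = (- (k.+1)%:R^-1)%:P * ('X + (k%:R)%:P) * bp k.
Proof. by []. Qed.
Lemma bp0 : bp 0 = 1. Proof. by []. Qed.

Lemma nzK (k : nat) : ((k.+1)%:R : K) != 0. Proof. by rewrite pnatr_eq0. Qed.

Lemma bp1 j : (j.+1)%:R%:P * bp j.+1 = - ('X + (j%:R)%:P) * bp j.
Proof. by rewrite bpS !mulrA -polyCM mulrN mulfV ?nzK // polyCN mulN1r mulNr. Qed.

Lemma bpX j : 'X * bp j = (- (j.+1)%:R) *: bp j.+1 + (- (j%:R)) *: bp j.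
Proof.
rewrite -!mul_polyC !polyCN !mulNr bp1; ring.
Qed.

Lemma bp_shift j : bp j.+1 \Po ('X - 1) = bp j.+1 + bp j.
Proof.
elim: j => [|j IH].
  rewrite bpS bp0 !(comp_polyM, comp_polyC, raddfN, comp_polyD, comp_polyX) rmorph1.
  rewrite invr1; ring.
have hc : ((j.+2)%:R : K)%:P != 0 by rewrite polyC_eq0 nzK.
apply: (mulfI hc).
rewrite -{1}(comp_polyC ((j.+2)%:R) ('X - 1)) -comp_polyM bp1.
rewrite comp_polyM IH raddfN /= comp_polyD comp_polyX comp_polyC [RHS]mulrDr bp1.
apply: (lin_comb (c := -1) (bp1 j)); ring.
Qed.

Definition ImD (q : {poly K}) := exists u : {poly K}, u - (u \Po ('X - 1)) = q.

Lemma ImD_add a b : ImD a -> ImD b -> ImD (a + b).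
Proof.
move=> [u <-] [w <-]; exists (u + w); rewrite comp_polyD; ring.
Qed.
Lemma ImD_scale (c : K) a : ImD a -> ImD (c *: a).
Proof. move=> [u <-]; exists (c *: u); by rewrite linearZ /= scalerBr. Qed.
Lemma ImD_bp j : ImD (bp j).
Proof.
exists (- bp j.+1).
have -> : (- bp j.+1) \Po ('X - 1) = - (bp j.+1 \Po ('X - 1)) by rewrite raddfN.
rewrite bp_shift; ring.
Qed.

Lemma ImD_all q : ImD q.
Proof.
suff : forall j, ImD (q * bp j) by move/(_ 0%N); rewrite bp0 mulr1.
elim/poly_ind: q => [|q c IH] j.
  by exists 0; rewrite mul0r comp_poly0 subr0.
rewrite mulrDl -mulrA bpX mulrDr -!scalerAr mul_polyC.
apply: ImD_add; [apply: ImD_add|]; apply: ImD_scale => //; exact: ImD_bp.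
Qed.
End Poly.
Arguments bp : simpl never.

Section Alg.
Variable K : numFieldType.
Variables (p : {poly K}) (A : algType K) (E F H : A).
Hypothesis HR : is_R_of p E F H.

Local Notation ev := (horner_alg H).

Lemma rE : E * F - F * E = ev p. Proof. by case: HR => [[]]. Qed.
Lemma rH : H * E - E * H = E. Proof. by case: HR => [[]]. Qed.
Lemma rF : H * F - F * H = - F. Proof. by case: HR => [[]]. Qed.

Lemma EH : E * H = (H - 1) * E.
Proof. by apply/esym; rewrite mulrBl mul1r -{2}rH opprB addrCA subrr addr0. Qed.

Lemma FH : F * H = (H + 1) * F.
Proof. by apply/esym; rewrite mulrDl mul1r -{2}(opprK F) -rF opprB addrCA subrr addr0. Qed.

Lemma EF : E * F = F * E + ev p.
Proof. by rewrite -rE addrCA subrr addr0. Qed.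

Lemma evX : ev 'X = H. Proof. exact: horner_algX. Qed.

Lemma alg_comm (c : K) (a : A) : c%:A * a = a * c%:A.
Proof. by rewrite mulr_algl mulr_algr. Qed.

Lemma ev_shiftE q : E * ev q = ev (q \Po ('X - 1)) * E.
Proof.
elim/poly_ind: q => [|q c IH]; first by rewrite comp_poly0 !rmorph0 mulr0 mul0r.
rewrite comp_polyD comp_polyM comp_polyX comp_polyC !rmorphD !rmorphM /=.
rewrite !horner_algC rmorphB rmorph1 /= horner_algX.
rewrite mulrDr mulrA IH -mulrA EH !mulrA mulrDl; congr (_ + _).
by rewrite alg_comm.
Qed.

Lemma ev_shiftF q : F * ev q = ev (q \Po ('X + 1)) * F.
Proof.
elim/poly_ind: q => [|q c IH]; first by rewrite comp_poly0 !rmorph0 mulr0 mul0r.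
rewrite comp_polyD comp_polyM comp_polyX comp_polyC !rmorphD !rmorphM /=.
rewrite !horner_algC rmorphD rmorph1 /= horner_algX.
rewrite mulrDr mulrA IH -mulrA FH !mulrA mulrDl; congr (_ + _).
by rewrite alg_comm.
Qed.

Lemma ev_commH q : H * ev q = ev q * H.
Proof. by rewrite -{1}evX -rmorphM mulrC rmorphM /= evX. Qed.

Definition uu : {poly K} := proj1_sig (cid (ImD_all p)).
Lemma uuP : uu - (uu \Po ('X - 1)) = p. Proof. exact: (proj2_sig (cid (ImD_all p))). Qed.

Definition Om : A := F * E + ev uu.

Lemma comm_ind (w : A) : w * E = E * w -> w * F = F * w -> w * H = H * w -> central w.
Proof.
move=> wE wF wH a; apply: (@gen_ind _ _ (fun a => w * a = a * w) _ _ _ _ p E F H HR) => //=.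
- by rewrite mulr1 mul1r.
- by move=> x y hx hy; rewrite mulrDr mulrDl hx hy.
- by move=> c x hx; rewrite -scalerAr -scalerAl hx.
- by move=> x y hx hy; rewrite mulrA hx -[x * w * y]mulrA hy mulrA.
Qed.

Lemma Om_central : central Om.
Proof.
have HU : uu \Po ('X + 1) = p \Po ('X + 1) + uu.
  rewrite -uuP comp_polyB -comp_polyA.
  have -> : ('X - 1) \Po ('X + 1) = 'X :> {poly K}.
    by rewrite comp_polyB comp_polyX comp_polyC addrK.
  rewrite comp_polyXr; ring.
have HE : ev (uu \Po ('X - 1)) = ev uu - ev p.
  have -> : uu \Po ('X - 1) = uu - p by rewrite -uuP; ring.
  by rewrite rmorphB.
apply: comm_ind; rewrite /Om.
- rewrite mulrDl mulrDr mulrA EF ev_shiftE HE mulrDl mulrBl -addrA.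
  by rewrite [ev p * E + _]addrCA subrr addr0.
- rewrite mulrDl mulrDr ev_shiftF HU rmorphD /= mulrDl.
  by rewrite -[F * E * F]mulrA EF mulrDr ev_shiftF -addrA.
- rewrite mulrDl mulrDr ev_commH; congr (_ + _).
  by rewrite -mulrA EH mulrA mulrBr mulr1 FH [(H + 1) * F]mulrDl mul1r addrK mulrA.
Qed.

Lemma central0 : @central K A 0. Proof. by move=> a; rewrite mul0r mulr0. Qed.
Lemma centralD (z1 z2 : A) : central z1 -> central z2 -> central (z1 + z2).
Proof. by move=> c1 c2 a; rewrite mulrDl mulrDr c1 c2. Qed.
Lemma centralZ (c : K) (z : A) : central z -> central (c *: z).
Proof. by move=> cz a; rewrite -scalerAl cz scalerAr. Qed.
Lemma centralM (z1 z2 : A) : central z1 -> central z2 -> central (z1 * z2).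
Proof. by move=> c1 c2 a; rewrite -mulrA c2 mulrA c1 mulrA. Qed.

Variables (V : lmodType K) (act : A -> V -> V).
Hypothesis Hmod : is_module act.
Variable eta : K.
Hypothesis eta0 : eta != 0.
Variable v : V.
Hypothesis Hv : act E v = eta *: v.
Hypothesis Hgen : forall w, exists a, w = act a v.

Lemma actDr a x y : act a (x + y) = act a x + act a y. Proof. by case: Hmod. Qed.
Lemma actDl a b x : act (a + b) x = act a x + act b x. Proof. by case: Hmod. Qed.
Lemma actZl c a x : act (c *: a) x = c *: act a x. Proof. by case: Hmod. Qed.
Lemma actM a b x : act (a * b) x = act a (act b x). Proof. by case: Hmod. Qed.
Lemma act1 x : act 1 x = x. Proof. by case: Hmod. Qed.
Lemma act0r a : act a 0 = 0.
Proof. by apply: (addrI (act a 0)); rewrite -actDr !addr0. Qed.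
Lemma act0l x : act 0 x = 0.
Proof. by apply: (addrI (act 0 x)); rewrite -actDl !addr0. Qed.
Lemma actZr c a x : act a (c *: x) = c *: act a x.
Proof.
have -> : c *: x = act (c%:A) x by rewrite actZl act1.
by rewrite -actM -alg_comm actM actZl act1.
Qed.
Lemma act_sum a n (f : 'I_n -> V) : act a (\sum_(i < n) f i) = \sum_(i < n) act a (f i).
Proof. exact: (big_morph _ (actDr a) (act0r a)). Qed.

Local Notation B j := (ev (bp K j)).

Definition S (x : V) := exists n (y : nat -> A),
  (forall j, central (y j)) /\ x = \sum_(j < n) act (y j * B j) v.

Lemma pad n m (y : nat -> A) : (n <= m)%N ->
  \sum_(j < m) act ((if (j < n)%N then y j else 0) * B j) v = \sum_(j < n) act (y j * B j) v.
Proof.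
move=> le; rewrite -(subnKC le) big_split_ord /= [X in _ + X]big1 ?addr0; last first.
  by move=> i _; rewrite ltnNge leq_addr /= mul0r act0l.
by apply: eq_bigr => i _; rewrite ltn_ord.
Qed.

Lemma S0 : S 0.
Proof. by exists 0%N, (fun _ => 0); split; [move=> _; exact: central0 | rewrite big_ord0]. Qed.

Lemma SD x1 x2 : S x1 -> S x2 -> S (x1 + x2).
Proof.
move=> [n1 [y1 [c1 ->]]] [n2 [y2 [c2 ->]]].
exists (maxn n1 n2), (fun j => (if (j < n1)%N then y1 j else 0) + (if (j < n2)%N then y2 j else 0)); split.
  by move=> j; apply: centralD; case: ifP => _ //; exact: central0.
rewrite -(pad y1 (leq_maxl n1 n2)) -(pad y2 (leq_maxr n1 n2)) -big_split /=.
by apply: eq_bigr => i _; rewrite mulrDl actDl.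
Qed.

Lemma S_scale c x : S x -> S (c *: x).
Proof.
move=> [n [y [cy ->]]]; exists n, (fun j => c *: y j); split.
  by move=> j; apply: centralZ.
by rewrite scaler_sumr; apply: eq_bigr => i _; rewrite -scalerAl actZl.
Qed.

Lemma S_sum n (f : 'I_n -> V) : (forall i, S (f i)) -> S (\sum_(i < n) f i).
Proof.
elim: n f => [|n IH] f hf; first by rewrite big_ord0; exact: S0.
by rewrite big_ord_recr; apply: SD; [apply: IH => i|]; exact: hf.
Qed.

Lemma S_single (y : A) j : central y -> S (act (y * B j) v).
Proof.
move=> cy; exists j.+1, (fun k => if k == j then y else 0); split.
  by move=> k; case: eqP => _ //; exact: central0.
rewrite big_ord_recr /= eqxx big1 ?add0r // => i _.
by rewrite (ltn_eqF (ltn_ord i)) mul0r act0l.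
Qed.

Lemma S_v : S v.
Proof.
have -> : v = act (1 * B 0) v by rewrite bp0 rmorph1 mulr1 act1.
by apply: S_single => a; rewrite mul1r mulr1.
Qed.

Lemma S_central (z : A) x : central z -> S x -> S (act z x).
Proof.
move=> cz [n [y [cy ->]]]; exists n, (fun j => z * y j); split.
  by move=> j; apply: centralM.
by rewrite act_sum; apply: eq_bigr => i _; rewrite -actM mulrA.
Qed.

Lemma S_lift a : (forall y j, central y -> S (act a (act (y * B j) v))) ->
  forall x, S x -> S (act a x).
Proof. by move=> h x [n [y [cy ->]]]; rewrite act_sum; apply: S_sum => i; exact: h. Qed.

Lemma S_H x : S x -> S (act H x).
Proof.
apply: S_lift => y j cy.
rewrite -actM mulrA -(cy H) -mulrA -{1}evX -rmorphM /= bpX rmorphD /= !linearZ /=.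
rewrite mulrDr !mulr_algl -!scalerAr actDl !actZl.
by apply: SD; apply: S_scale; apply: S_single.
Qed.

Lemma S_ev q x : S x -> S (act (ev q) x).
Proof.
elim/poly_ind: q x => [|q c IH] x hx; first by rewrite rmorph0 act0l; exact: S0.
rewrite rmorphD rmorphM /= horner_algX horner_algC actDl actM actZl act1.
by apply: SD; [apply: IH; apply: S_H | apply: S_scale].
Qed.

Lemma S_E x : S x -> S (act E x).
Proof.
apply: S_lift => y j cy.
rewrite -actM mulrA -(cy E) -mulrA ev_shiftE mulrA !actM Hv.
by apply: S_central => //; apply: S_ev; apply: S_scale; exact: S_v.
Qed.

Lemma S_Fv : S (act F v).
Proof.
have -> : act F v = eta^-1 *: (act Om v + (-1) *: act (ev uu) v).
  by rewrite scaleN1r {1}/Om actDl actM Hv actZr addrK scalerA mulVf // scale1r.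
apply: S_scale; apply: SD; first by apply: S_central; [exact: Om_central | exact: S_v].
by apply: S_scale; apply: S_ev; exact: S_v.
Qed.

Lemma S_F x : S x -> S (act F x).
Proof.
apply: S_lift => y j cy.
rewrite -actM mulrA -(cy F) -mulrA ev_shiftF mulrA !actM.
by apply: S_central => //; apply: S_ev; exact: S_Fv.
Qed.

Lemma S_act a : S (act a v).
Proof.
have : forall x, S x -> S (act a x).
  apply: (@gen_ind _ _ (fun a => forall x, S x -> S (act a x)) _ _ _ _ p E F H HR) => /=.
  - by move=> x hx; rewrite act1.
  - by move=> b c hb hc x hx; rewrite actDl; apply: SD; [apply: hb | apply: hc].
  - by move=> c b hb x hx; rewrite actZl; apply: S_scale; apply: hb.
  - by move=> b c hb hc x hx; rewrite actM; apply: hb; apply: hc.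
  - exact: S_E.
  - exact: S_F.
  - exact: S_H.
by move=> h; apply: h; exact: S_v.
Qed.

Lemma E_term0 (y : A) : central y -> act E (act (y * B 0) v) = eta *: act (y * B 0) v.
Proof. by move=> cy; rewrite bp0 rmorph1 mulr1 -actM -(cy E) actM Hv actZr. Qed.

Lemma E_termS (y : A) j : central y ->
  act E (act (y * B j.+1) v) = eta *: act (y * B j.+1) v + eta *: act (y * B j) v.
Proof.
move=> cy; rewrite -actM mulrA -(cy E) -mulrA ev_shiftE bp_shift rmorphD /=.
by rewrite mulrA actM Hv actZr mulrDr actDl scalerDr.
Qed.

Lemma DE n (y : nat -> A) : (forall j, central (y j)) ->
  act E (\sum_(j < n.+1) act (y j * B j) v) =
  eta *: (\sum_(j < n.+1) act (y j * B j) v) + eta *: \sum_(j < n) act (y j.+1 * B j) v.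
Proof.
move=> cy; rewrite act_sum !big_ord_recl E_term0 //.
under eq_bigr => i _ do rewrite lift0 E_termS //.
by rewrite big_split /= scalerDr !scaler_sumr addrA.
Qed.

Lemma key n : forall y : nat -> A, (forall j, central (y j)) ->
  \sum_(j < n) act (y j * B j) v = 0 -> forall j, (j < n)%N -> act (y j) v = 0.
Proof.
elim: n => [|n IH] y cy h j; first by [].
have h2 : \sum_(j < n) act (y j.+1 * B j) v = 0.
  have := DE n cy; rewrite h act0r scaler0 add0r => /esym/eqP.
  by rewrite scaler_eq0 (negbTE eta0) /= => /eqP.
have IH' := IH (fun j => y j.+1) (fun j => cy j.+1) h2.
have tz : forall i, (i < n)%N -> act (y i.+1 * B i.+1) v = 0.
  by move=> i lt; rewrite (cy i.+1) actM IH' // act0r.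
case: j => [|j] lt; last exact: IH'.
move: h; rewrite big_ord_recl big1 ?addr0; last by move=> i _; rewrite lift0; apply: tz.
by rewrite bp0 rmorph1 mulr1.
Qed.

Lemma whit w : act E w = eta *: w -> exists z, central z /\ w = act z v.
Proof.
have [a ew] := Hgen w.
have [n [y [cy ew2]]] := S_act a.
rewrite -ew in ew2; rewrite ew2.
case: n y cy ew2 => [|n] y cy _ Hw.
  by exists 0; split; [exact: central0 | rewrite big_ord0 act0l].
have e := DE n cy; rewrite Hw in e.
have h2 : eta *: \sum_(j < n) act (y j.+1 * B j) v = 0.
  by apply: (addrI (eta *: \sum_(j < n.+1) act (y j * B j) v)); rewrite -e addr0.
move/eqP: h2; rewrite scaler_eq0 (negbTE eta0) /= => /eqP h2.
have kz := key (fun j => cy j.+1) h2.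
exists (y 0%N); split => //.
rewrite big_ord_recl big1 ?addr0; first by rewrite bp0 rmorph1 mulr1.
by move=> i _; rewrite lift0 (cy i.+1) actM kz // act0r.
Qed.

Lemma endo_central g : is_endo act g -> exists z, central z /\ forall x, g x = act z x.
Proof.
case=> gD gA.
have gZ c x : g (c *: x) = c *: g x.
  have -> : c *: x = act (c%:A) x by rewrite actZl act1.
  by rewrite gA actZl act1.
have : act E (g v) = eta *: g v by rewrite -gA Hv gZ.
case/whit => z [cz ez]; exists z; split => // x.
have [a ->] := Hgen x.
by rewrite gA ez -!actM (cz a).
Qed.

End Alg.

Theorem mainTheorem5 (Rr : realType) (p : {poly Rr[i]})
  (A : algType Rr[i]) (E F H : A) (HR : is_R_of p E F H)
  (V : lmodType Rr[i]) (act : A -> V -> V) (Hmod : is_module act)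
  (etaE : Rr[i]) (HetaE : etaE != 0) (HW : whittaker_module act E etaE) :
  [/\ (forall z : A, central z -> is_endo act (act z)),
      (forall g : V -> V, is_endo act g -> exists z : A, central z /\ forall v, g v = act z v),
      (forall z : A, central z -> ((forall v, act z v = 0) <-> in_Z_V act z))
    & (forall g1 g2 : V -> V, is_endo act g1 -> is_endo act g2 ->
         forall v, g1 (g2 v) = g2 (g1 v))].
Proof.
case: HW => v [Hv Hgen].
have key := @endo_central (Rr[i] : numFieldType) p A E F H HR V act Hmod etaE HetaE v Hv Hgen.
split.
- move=> z cz; split; first by move=> x y; case: Hmod.
  by move=> a x; case: Hmod => _ _ _ hM _; rewrite -!hM cz.
- exact: key.
- move=> z cz; split; first by move=> h; split.
  by case.
- move=> g1 g2 h1 h2 x.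
  case: (key g1 h1) => z1 [c1 e1]; case: (key g2 h2) => z2 [c2 e2].
  by rewrite !e1 !e2; case: Hmod => _ _ _ hM _; rewrite -!hM c1.
Qed.
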